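(* Let $(q_{i,j})_{i,j\in\mathbb Z^{\geq 0}}$ be the infinite array of non-negative integers defined greedily (row by row, and within each row by increasing $j$) by $$q_{i,j}=\operatorname{mex}\Big(\{q_{i,k}+q_{l,j}-q_{l,k}\mid 0\leq l<i,\ 0\leq k<j\}\cap\mathbb Z^{\geq 0}\Big),$$ and let $q_j=q_{2,j}$. Then the sequence $(q_j)_{j\in\mathbb Z^{\geq 0}}$ is a permutation of $\mathbb Z^{\geq 0}$, and every integer appears exactly once in the sequence $(q_j-j)_{j\in\mathbb Z^{\geq 0}}$.
   Context: $\mathbb Z^{\geq 0}=\{0,1,2,\dots\}$. For $X\subseteq\mathbb Z^{\ge0}$, $\operatorname{mex}(X)=\min(\mathbb Z^{\geq 0}\setminus X)$, with $\operatorname{mex}(\emptyset)=0$. (Row $0$ of the array is identically $0$ and row $1$ is $q_{1,j}=j$.) *)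

(* Defs.v *)
From mathcomp Require Import all_boot all_order all_algebra.
Set Implicit Arguments. Unset Strict Implicit. Unset Printing Implicit Defensive.
Import GRing.Theory Num.Theory.

(* Since s has at most (size s) distinct
   elements, some m <= size s is missing, so searching iota 0 (size s).+1
   finds the least missing value (find returns an index, equal to the value). *)
Definition mex (s : seq nat) : nat :=
  find (fun m => m \notin s) (iota 0 (size s).+1).

(* Given the previous rows [prev] (rows 0..i-1, as full functions) and the
   already computed prefix [s] = [q_{i,0}; ...; q_{i,j-1}] of row i, the set
   { q_{i,k} + q_{l,j} - q_{l,k} | l < i, k < j } ∩ Z>=0, as a seq nat. *)
Definition cands (prev : seq (nat -> nat)) (s : seq nat) (j : nat) : seq nat :=
  [seq `|v|%N | v <- [seq ((nth 0%N s k)%:Z + (r j)%:Z - (r k)%:Z)%R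
                      | r <- prev, k <- iota 0 j] & (0 <= v)%R].

Fixpoint row_prefix (prev : seq (nat -> nat)) (n : nat) : seq nat :=
  match n with
  | 0 => [::]
  | n'.+1 => let s := row_prefix prev n' in rcons s (mex (cands prev s n'))
  end.

Definition new_row (prev : seq (nat -> nat)) : nat -> nat :=
  fun j => nth 0%N (row_prefix prev j.+1) j.

Fixpoint rows (i : nat) : seq (nat -> nat) :=
  match i with
  | 0 => [::]
  | i'.+1 => rcons (rows i') (new_row (rows i'))
  end.

Definition qarr (i j : nat) : nat := nth (fun _ => 0%N) (rows i.+1) i j.

Definition qseq (j : nat) : nat := qarr 2 j.

(* Main.v *)
Require Import Defs.
From mathcomp Require Import all_boot all_order all_algebra zify.
From Stdlib Require Import Classical.
Import GRing.Theory Num.Theory.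

Lemma mex_has (s : seq nat) : has (fun m => m \notin s) (iota 0 (size s).+1).
Proof.
apply/negPn/negP => /hasPn H.
have : size (iota 0 (size s).+1) <= size s.
  apply: uniq_leq_size; first exact: iota_uniq.
  by move=> x /H; rewrite negbK.
by rewrite size_iota ltnn.
Qed.

Lemma mex_le s : mex s <= size s.
Proof. have := mex_has s. rewrite has_find size_iota /mex. lia. Qed.

Lemma mex_notin s : mex s \notin s.
Proof.
have Hf : mex s < (size s).+1.
  by rewrite /mex -[X in _ < X](size_iota 0) -has_find mex_has.
have := nth_find 0 (mex_has s). by rewrite nth_iota.
Qed.

Lemma mex_lt (s : seq nat) x : x < mex s -> x \in s.
Proof.
move=> H. have := before_find 0 H.
have Hm := mex_le s.
rewrite nth_iota ?add0n; last by lia. by move/negbFE.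
Qed.


Lemma mex_eq s m : (forall x, x < m -> x \in s) -> m \notin s -> mex s = m.
Proof.
move=> H1 H2. case: (ltngtP (mex s) m) => // H.
- by move: (mex_notin s); rewrite H1.
- by move: (@mex_lt s _ H); rewrite (negbTE H2).
Qed.

Lemma row_prefix_map prev n :
  row_prefix prev n = [seq new_row prev k | k <- iota 0 n].
Proof.
elim: n => // n IH.
rewrite /= -/(row_prefix prev n) IH. transitivity [seq new_row prev k | k <- iota 0 n.+1]; last by []. rewrite -[n.+1]addn1 iotaD map_cat /= cats1. congr rcons.
by rewrite /new_row /= IH nth_rcons size_map size_iota ltnn eqxx.
Qed.

Lemma new_rowE prev j :
  new_row prev j = mex (cands prev [seq new_row prev k | k <- iota 0 j] j).
Proof.
by rewrite {1}/new_row /= row_prefix_map nth_rcons size_map size_iota ltnn eqxx.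
Qed.

Lemma mem_absfilter (L : seq int) (x : nat) :
  x \in [seq `|v|%N | v <- L & (0 <= v)%R] <-> (Posz x \in L).
Proof.
split.
- case/mapP => v; rewrite mem_filter => /andP [H0 Hv] ->.
  by rewrite gez0_abs.
- move=> H; apply/mapP; exists (Posz x) => //. by rewrite mem_filter H andbT.
Qed.

Lemma mem_mapF (h f : nat -> nat) j (x : nat) :
  (Posz x \in [seq ((nth 0%N [seq h k | k <- iota 0 j] k)%:Z + (f j)%:Z - (f k)%:Z)%R | k <- iota 0 j])
  <-> exists2 k, k < j & x + f k = h k + f j.
Proof.
split.
- case/mapP => k; rewrite mem_iota add0n /= => Hk.
  rewrite (nth_map 0) ?size_iota // nth_iota // add0n => E.
  exists k => //. lia.
- case=> k Hk E. apply/mapP; exists k; first by rewrite mem_iota.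
  rewrite (nth_map 0) ?size_iota // nth_iota // add0n. lia.
Qed.

Definition r0 := new_row [::].
Definition r1 := new_row [:: r0].
Definition q := new_row [:: r0; r1].

Lemma r0E j : r0 j = 0.
Proof. by rewrite /r0 new_rowE. Qed.

Lemma r1E j : r1 j = j.
Proof.
elim/ltn_ind: j => j IH.
rewrite /r1 new_rowE -/r1. apply: mex_eq.
- move=> x Hx. rewrite /cands /= cats0. apply/mem_absfilter/mem_mapF.
  exists x => //. rewrite !r0E IH //. 
- apply/negP => /mem_absfilter. rewrite /cands /= cats0 => /mem_mapF [k Hk].
  rewrite !r0E IH //. lia.
Qed.

Lemma qE j : q j = mex (cands [:: r0; r1] [seq q k | k <- iota 0 j] j).
Proof. exact: new_rowE. Qed.

Lemma q_cands j x :
  x \in cands [:: r0; r1] [seq q k | k <- iota 0 j] j <->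
  exists2 k, k < j & (x = q k \/ x + k = q k + j).
Proof.
rewrite /cands /= cats0. split.
- move/mem_absfilter; rewrite mem_cat => /orP [] /mem_mapF [k Hk E];
  exists k => //; move: E; rewrite ?r0E ?r1E; lia.
- case=> k Hk E. apply/mem_absfilter; rewrite mem_cat; apply/orP.
  case: E => E; [left|right]; apply/mem_mapF; exists k => //;
  rewrite ?r0E ?r1E; lia.
Qed.

Lemma q_new j k : k < j -> q j <> q k /\ q j + k <> q k + j.
Proof.
move=> Hk. have := mex_notin (cands [:: r0; r1] [seq q k | k <- iota 0 j] j).
rewrite -qE => /negP H. split => E; apply: H; apply/q_cands; exists k => //; by [left | right].
Qed.

Lemma q_min j v : v < q j -> exists2 k, k < j & (v = q k \/ v + k = q k + j).
Proof. rewrite qE => /mex_lt /q_cands //. Qed.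

Lemma q_le j : q j <= 2 * j.
Proof.
rewrite qE. apply: (leq_trans (mex_le _)).
rewrite /cands /= cats0 size_map size_filter (leq_trans (count_size _ _)) //.
by rewrite size_cat !size_map size_iota; lia.
Qed.

Lemma q_inj : injective q.
Proof.
move=> a b E. case: (ltngtP a b) => // H.
- by case: (@q_new _ _ H); rewrite E.
- by case: (@q_new _ _ H); rewrite E.
Qed.

Lemma d_inj a b : q a + b = q b + a -> a = b.
Proof.
move=> E. case: (ltngtP a b) => // H.
- case: (@q_new _ _ H) => _ []; lia.
- case: (@q_new _ _ H) => _ []; lia.
Qed.

Lemma qseqE j : qseq j = q j.
Proof. reflexivity. Qed.


Lemma small_uniq (s : seq nat) c : uniq s -> (forall x, x \in s -> x < c) -> size s <= c.
Proof.
move=> Hu Hs. rewrite -(size_iota 0 c). apply: uniq_leq_size => // x /Hs.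
by rewrite mem_iota.
Qed.

Lemma uniq_sum (s : seq nat) : uniq s -> size s * (size s).-1 <= 2 * \sum_(x <- s) x.
Proof.
move: {2}(size s) (erefl (size s)) => n. elim: n s => [|n IH] s Hs Hu.
  by rewrite Hs.
have [x Hx Hxn] : exists2 x, x \in s & n <= x.
  case: (boolP (has (fun x => n <= x) s)) => [/hasP //|/hasPn H].
  have : size s <= n.
    apply: small_uniq => // y /H. by rewrite -ltnNge.
  by rewrite Hs ltnn.
have Hp : perm_eq s (x :: rem x s) by rewrite perm_to_rem.
rewrite (perm_big _ Hp) big_cons /=.
have Hs' : size (rem x s) = n by rewrite size_rem // Hs.
have Hu' : uniq (rem x s) by rewrite rem_uniq.
have := IH _ Hs' Hu'. rewrite Hs' Hs /=. case: n {IH Hs Hs'} Hxn => [|n] Hxn /=; lia.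
Qed.

Lemma gap_lemma (T : seq nat) (J : nat -> nat) (c M : nat) :
  uniq T -> {in T &, injective J} ->
  (forall x, x \in T -> c <= x -> x \in map J T) ->
  (forall x, x \in T -> J x <= M) ->
  \sum_(x <- T) J x <= \sum_(x <- T) x + c * M.
Proof.
move=> Hu Hinj Hc HM.
set I := map J T.
have HuI : uniq I by rewrite map_inj_in_uniq.
set T' := [seq x <- T | c <= x].
have HT'I : {subset T' <= I} by move=> x; rewrite mem_filter => /andP [H1 H2]; apply: Hc.
rewrite -(big_map J predT id) -/I.
rewrite (bigID (fun y => y \in T')) /=.
have Pf : perm_eq [seq y <- I | y \in T'] T'.
  apply: uniq_perm.
  - exact: filter_uniq.
  - exact: filter_uniq.
  - move=> y. rewrite mem_filter. apply/andP/idP => [[]//|H]. split => //. exact: HT'I.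
have E1 : \sum_(y <- I | y \in T') y = \sum_(y <- T') y.
  by rewrite -big_filter; apply: perm_big.
have E2 : \sum_(y <- T') y <= \sum_(y <- T) y.
  rewrite /T' big_filter [X in _ <= X](bigID (fun x => c <= x)) /=. exact: leq_addr.
have E3 : \sum_(y <- I | y \notin T') y <= count (fun y => y \notin T') I * M.
  rewrite big_seq_cond.
  apply: (@leq_trans (\sum_(y <- I | (y \in I) && (y \notin T')) M)).
    apply: leq_sum => y /andP [HyI _]. case/mapP: HyI => x Hx ->. exact: HM.
  rewrite big_const_seq iter_addn_0 mulnC leq_mul2r. apply/orP; right.
  apply: sub_count => y /andP [] //.
have E4 : count (fun y => y \notin T') I <= c.
  have H1 := count_predC (mem T') I.
  have H2 : count (mem T') I = size T' by rewrite -size_filter (perm_size Pf).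
  have H3 := count_predC (fun x => c <= x) T.
  have H4 : size T' = count (fun x => c <= x) T by rewrite size_filter.
  have H5 : count (predC (fun x => c <= x)) T <= c.
    rewrite -size_filter. apply: small_uniq; first exact: filter_uniq.
    by move=> x; rewrite mem_filter /= -ltnNge => /andP [].
  have H6 : size I = size T by rewrite size_map.
  have H7 : count (fun y => y \notin T') I = count (predC (mem T')) I by [].
  rewrite H7 -(leq_add2l (count (mem T') I)) H1 H2 H6 H4 -H3 leq_add2l //.
rewrite E1. have := leq_mul2r M (count (fun y => y \notin T') I) c. rewrite E4 orbT => H8.
apply: leq_add => //. exact: leq_trans E3 H8.
Qed.



Lemma q_bound n : (forall m, m < n -> exists j, q j = m) ->
  exists B, forall k, B <= k -> n <= q k.
Proof.
move=> IH. suff: forall m, m <= n -> exists B, forall k, B <= k -> m <= q k.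
  by apply.
elim=> [|m IHm] Hm; first by exists 0.
case: (IHm (ltnW Hm)) => B HB. case: (IH m Hm) => j Hj.
exists (maxn B j.+1) => k Hk. have := HB k. 
have Hkj : k <> j by lia.
have : q k <> q j by move/q_inj.
lia.
Qed.

Lemma q_surj n : exists j, q j = n.
Proof.
elim/ltn_ind: n => n IH.
have [B HB] := @q_bound n IH.
apply: NNPP => Hno.
have Hno' : forall j, q j <> n by move=> j E; apply: Hno; exists j.
have C1 : forall J, B <= J -> exists k, (B <= J) ==> ((k < J) && (n + k == q k + J)).
  move=> J HJ. have Hl : n < q J by have := HB J HJ; have := Hno' J; lia.
  case: (@q_min _ _ Hl) => k Hk [E|E]; first by case: (Hno' k).
  exists k. rewrite HJ Hk /=. by apply/eqP.
have C1' : forall J, exists k, (B <= J) ==> ((k < J) && (n + k == q k + J)).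
  move=> J. case: (boolP (B <= J)) => HJ; first by move: (C1 J HJ); rewrite HJ.
  by exists 0.
have C2 : forall J, B <= J -> n + J < q J + B.
  move=> J HJ. rewrite ltnNge; apply/negP => Hle.
  have HnJ := HB J HJ.
  case: (C1 (n + J - q J)); first lia.
  move=> k /implyP /(_ ltac:(lia)) /andP [Hk /eqP E].
  have Hk' : k < J by lia.
  case: (@q_new _ _ Hk') => _; lia.
pose f J := xchoose (C1' J).
have Hf : forall J, B <= J -> (f J < J) && (n + f J == q (f J) + J).
  move=> J HJ. by have := xchooseP (C1' J) => /implyP /(_ HJ).
have : size [seq f J | J <- iota B B.+1] <= size (iota 0 B).
  apply: uniq_leq_size.
  - rewrite map_inj_in_uniq ?iota_uniq //.
    move=> J1 J2; rewrite !mem_iota => /andP [H1 _] /andP [H2 _] E.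
    have := Hf _ H1; have := Hf _ H2; rewrite E. lia.
  - move=> x /mapP [J]; rewrite mem_iota => /andP [H1 H1'] ->.
    rewrite mem_iota add0n /=.
    have /andP [_ /eqP E] := Hf _ H1.
    rewrite ltnNge; apply/negP => Hge.
    have := C2 _ Hge. lia.
by rewrite size_map !size_iota ltnn.
Qed.


Lemma arith (a b t u sTq sUq sTk sUk sg sh : nat) :
  t + u = 30 * (a + b + 1) ->
  (30 * (a + b + 1)) * (30 * (a + b + 1)).-1 <= 2 * (sTq + sUq) ->
  2 * (sTk + sUk) = (30 * (a + b + 1)) * (30 * (a + b + 1)).-1 ->
  sTq + t * b = sg + sTk + t * a ->
  t * t.-1 <= 2 * sg ->
  sg + sTk <= sTk + b * (2 * (30 * (a + b + 1)) + b) ->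
  sUq + u * b + sh = sUk + u * a ->
  u * u.-1 <= 2 * sh -> False.
Proof.
set c := a + b + 1. set N := 30 * c. set M := 2 * N + b.
move=> Hs Sq Sk E1 SG Gap E2 SH.
have Hb : t * b + u * b = N * b by rewrite -mulnDl Hs.
have Ha : t * a + u * a = N * a by rewrite -mulnDl Hs.
have L0 : sg <= b * M by lia.
have L1 : sh <= b * M + N * a by lia.
have Ht : t * t <= t + 2 * (b * M).
  case: t SG {Hs Hb Ha E1} => //= t'. rewrite [t'.+1 * t'.+1]mulnS. lia.
have Hu : u * u <= u + 2 * (b * M) + 2 * (N * a).
  case: u SH {Hs Hb Ha E2} => //= u'. rewrite [u'.+1 * u'.+1]mulnS. lia.
have L3 : N * N <= 2 * (t * t + u * u).
  have := (nat_Cauchy t u).1. rewrite -Hs !expnS !expn0 !muln1.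
  rewrite mulnDl !mulnDr [u * t]mulnC. move=> H; clear -H; lia.
have L4 : N * N <= 2 * N + 8 * (b * M) + 4 * (N * a) by lia.
have Hbc : b <= c by rewrite /c; lia.
have Hac : a <= c by rewrite /c; lia.
have Hc1 : 1 <= c by rewrite /c; lia.
have E5 : b * M <= c * (61 * c) by apply: leq_mul => //; rewrite /M /N; lia.
have E6 : N * a <= (30 * c) * c by apply: leq_mul.
have E7 : N <= (30 * c) * c by rewrite /N -{1}(muln1 (30 * c)); apply: leq_mul.
have E8 : N * N = 900 * (c * c) by rewrite /N; lia.
rewrite mulnCA in E5. rewrite -mulnA in E6 E7.
lia.
Qed.

Lemma gauss N : 2 * \sum_(0 <= k < N) k = N * N.-1.
Proof.
elim: N => [|N IH]; first by rewrite big_geq.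
rewrite big_nat_recr //= mulnDr IH. case: N {IH} => //= N. lia.
Qed.

Lemma sum_const_seq (s : seq nat) (c : nat) : \sum_(x <- s) c = size s * c.
Proof. by rewrite big_const_seq iter_addn_0 count_predT mulnC. Qed.

Lemma diag_surj a b : exists j, q j + b = j + a.
Proof.
apply: NNPP => H.
have Hm : forall k, q k + b <> k + a by move=> k E; apply: H; exists k.
have F1 : forall J, b <= J -> J + a < q J + b -> exists2 k, k < J & q k + b = J + a.
  move=> J HJ HJq. have Hv : J + a - b < q J by lia.
  case: (@q_min _ _ Hv) => k Hk [E|E]; first by exists k => //; lia.
  case: (Hm k); lia.
set N := 30 * (a + b + 1).
set M := 2 * N + b.
set Pr := fun k => k + a < q k + b.
set T := [seq k <- index_iota 0 N | Pr k].
set U := [seq k <- index_iota 0 N | q k + b < k + a].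
set Jf := fun k => q k + b - a.
set g := fun k => Jf k - k.
set h := fun k => k + a - (q k + b).
have memT : forall k, k \in T = (k < N) && (k + a < q k + b).
  by move=> k; rewrite mem_filter mem_index_iota /Pr andbC.
have memU : forall k, k \in U = (k < N) && (q k + b < k + a).
  by move=> k; rewrite mem_filter mem_index_iota andbC.
have uT : uniq T by rewrite filter_uniq // iota_uniq.
have uU : uniq U by rewrite filter_uniq // iota_uniq.
have Gap : \sum_(x <- T) Jf x <= \sum_(x <- T) x + b * M.
  apply: gap_lemma => //.
  - move=> x y; rewrite !memT => /andP [_ Hx] /andP [_ Hy] E.
    apply: q_inj. rewrite /Jf in E. lia.
  - move=> x; rewrite memT => /andP [HxN Hx] Hbx.
    case: (F1 x Hbx Hx) => k Hk E. apply/mapP; exists k.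
      rewrite memT. apply/andP; split; lia.
    rewrite /Jf. lia.
  - move=> x; rewrite memT => /andP [HxN _]. have := q_le x. rewrite /Jf /M. lia.
have ET : \sum_(x <- T) Jf x = \sum_(x <- T) g x + \sum_(x <- T) x.
  rewrite -big_split /=. apply: eq_big_seq => x; rewrite memT => /andP [_ Hx].
  rewrite /g /Jf. lia.
have uG : uniq (map g T).
  rewrite map_inj_in_uniq // => x y; rewrite !memT => /andP [_ Hx] /andP [_ Hy] E.
  apply: d_inj. rewrite /g /Jf in E. lia.
have uH : uniq (map h U).
  rewrite map_inj_in_uniq // => x y; rewrite !memU => /andP [_ Hx] /andP [_ Hy] E.
  apply: d_inj. rewrite /h in E. lia.
have SG := @uniq_sum _ uG. rewrite big_map size_map in SG.
have SH := @uniq_sum _ uH. rewrite big_map size_map in SH.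
have E1 : \sum_(x <- T) q x + size T * b = \sum_(x <- T) g x + \sum_(x <- T) x + size T * a.
  rewrite -!sum_const_seq -!big_split /=. apply: eq_big_seq => x; rewrite memT => /andP [_ Hx].
  rewrite /g /Jf. lia.
have E2 : \sum_(x <- U) q x + size U * b + \sum_(x <- U) h x = \sum_(x <- U) x + size U * a.
  rewrite -!sum_const_seq -!big_split /=. apply: eq_big_seq => x; rewrite memU => /andP [_ Hx].
  rewrite /h. lia.
have predE : forall k, ~~ Pr k = (q k + b < k + a).
  move=> k. rewrite /Pr -leqNgt leq_eqVlt. have := Hm k.
  case: eqP => //= E; lia.
have Split : forall F : nat -> nat, \sum_(0 <= k < N) F k = \sum_(x <- T) F x + \sum_(x <- U) F x.
  move=> F. rewrite (bigID Pr) /= /T /U !big_filter. congr (_ + _).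
  apply: eq_bigl => k; exact: predE.
have Size : size T + size U = N.
  have := Split (fun _ => 1). by rewrite !sum_const_seq /index_iota subn0 size_iota !muln1.
have Sq : N * N.-1 <= 2 * \sum_(0 <= k < N) q k.
  have uQ : uniq (map q (index_iota 0 N)) by rewrite map_inj_uniq ?iota_uniq //; exact: q_inj.
  have := @uniq_sum _ uQ. by rewrite big_map size_map /index_iota subn0 size_iota.
have Sk := gauss N.
rewrite Split in Sq. rewrite Split in Sk.
move: Gap. rewrite ET => Gap.
set t := size T in E1 SG Size. set u := size U in E2 SH Size.
set sTq := \sum_(x <- T) q x in E1 Sq.
set sUq := \sum_(x <- U) q x in E2 Sq.
set sTk := \sum_(x <- T) x in E1 Sk Gap.
set sUk := \sum_(x <- U) x in E2 Sk.
set sg := \sum_(x <- T) g x in E1 SG Gap.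
set sh := \sum_(x <- U) h x in E2 SH.
exact: (@arith _ _ _ _ _ _ _ _ _ _ Size Sq Sk E1 SG Gap E2 SH).
Qed.

Theorem theorem5p1 :
  bijective qseq /\
  (forall z : int, exists! j : nat, ((qseq j)%:Z - j%:Z)%R = z).
Proof.
split.
- have Ex : forall n, exists j, q j == n.
    by move=> n; case: (q_surj n) => j Hj; exists j; apply/eqP.
  exists (fun n => xchoose (Ex n)).
  + move=> j. apply: q_inj. exact/eqP/(xchooseP (Ex (q j))).
  + move=> n. exact/eqP/(xchooseP (Ex n)).
- move=> z.
  have [j Hj] : exists j, ((q j)%:Z - j%:Z)%R = z.
    case: z => n.
    + case: (diag_surj n 0) => j Hj; exists j; lia.
    + case: (diag_surj 0 n.+1) => j Hj; exists j. rewrite NegzE. lia.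
  exists j; split; first by [].
  move=> j' Hj'. change (((q j')%:Z - j'%:Z)%R = z) in Hj'. apply: d_inj. lia.
Qed.
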